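(* Let $\Lambda\subseteq\Delta$ be a non-empty closed convex set. Assume there is $L\ge0$ such that for every $g\in\mathcal G_1$ the map $\lambda\mapsto D_{KL}(\hat{\mathsf p}_\lambda\,\|\,\pi_g)$ is finite-valued and $L$-Lipschitz on $\Delta$ with respect to $\|\cdot\|_1$. Let $V^*_\Delta=\inf_{g\in\mathcal G_1}\max_{\lambda\in\Delta}D_{KL}(\hat{\mathsf p}_\lambda\|\pi_g)$ and $V^*_\Lambda=\inf_{g\in\mathcal G_1}\max_{\lambda\in\Lambda}D_{KL}(\hat{\mathsf p}_\lambda\|\pi_g)$. Then $$0\le V^*_\Delta-V^*_\Lambda\le L\cdot d_H(\Lambda,\Delta),\qquad d_H(\Lambda,\Delta)=\max_{\lambda\in\Delta}\min_{\lambda'\in\Lambda}\|\lambda-\lambda'\|_1 .$$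
   Context: Fix an integer $p\ge 1$, $[1,p]=\{1,\dots,p\}$, $\Delta=\{\lambda\in\mathbb R^p:\lambda_k\ge 0,\ \sum_k\lambda_k=1\}$. Let $\hat{\mathsf p}_1,\dots,\hat{\mathsf p}_p$ be probability distributions with finite supports, $\mathcal X_0=\bigcup_k\mathrm{supp}(\hat{\mathsf p}_k)$, and $\hat\pi_1,\dots,\hat\pi_p$ probability distributions on $\mathcal X_0$. A gate is $g:\mathcal X_0\times[1,p]\to[0,1]$ with $\sum_kg(x,k)=1$ for each $x$; $\pi_g(x)=\sum_kg(x,k)\hat\pi_k(x)$, $Z_g=\sum_{x\in\mathcal X_0}\pi_g(x)$, $\mathcal G_1=\{g:Z_g=1\}$. For $\lambda\in\Delta$, $\hat{\mathsf p}_\lambda=\sum_k\lambda_k\hat{\mathsf p}_k$. $D_{KL}(P\|Q)=\sum_xP(x)\log\frac{P(x)}{Q(x)}\in[0,\infty]$ with conventions $0\log\frac0q=0$, $a\log\frac a0=+\infty$ for $a>0$. *)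

(* Defs.v *)
From mathcomp Require Import all_boot all_order all_algebra.
From mathcomp Require Import all_classical all_reals all_analysis.
Set Implicit Arguments. Unset Strict Implicit. Unset Printing Implicit Defensive.
Import Order.TTheory GRing.Theory Num.Theory.
Import numFieldNormedType.Exports.
Local Open Scope classical_set_scope.
Local Open Scope ring_scope.

(* Weight vectors lambda in R^p are row vectors 'rV[R]_p; index k : 'I_p
   stands for the paper's k in [1,p]. *)

Definition is_distr (R : realType) (X : finType) (P : X -> R) : Prop :=
  (forall x, 0 <= P x) /\ \sum_(x : X) P x = 1.

Definition simplex (R : realType) (p : nat) : set 'rV[R]_p :=
  [set l | (forall k, 0 <= l ord0 k) /\ \sum_(k < p) l ord0 k = 1].

Definition l1norm (R : realType) (p : nat) (l : 'rV[R]_p) : R :=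
  \sum_(k < p) `|l ord0 k|.

Definition convexR (R : realType) (p : nat) (A : set 'rV[R]_p) : Prop :=
  forall a b (t : R), A a -> A b -> 0 <= t -> t <= 1 ->
    A (t *: a + (1 - t) *: b).

Definition mixture (R : realType) (X : finType) (p : nat)
  (phat : 'I_p -> X -> R) (l : 'rV[R]_p) (x : X) : R :=
  \sum_(k < p) l ord0 k * phat k x.

Definition is_gate (R : realType) (X : finType) (p : nat)
  (g : X -> 'I_p -> R) : Prop :=
  forall x, (forall k, 0 <= g x k <= 1) /\ \sum_(k < p) g x k = 1.

Definition pi_g (R : realType) (X : finType) (p : nat)
  (pihat : 'I_p -> X -> R) (g : X -> 'I_p -> R) (x : X) : R :=
  \sum_(k < p) g x k * pihat k x.

Definition Z_g (R : realType) (X : finType) (p : nat)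
  (pihat : 'I_p -> X -> R) (g : X -> 'I_p -> R) : R :=
  \sum_(x : X) pi_g pihat g x.

Definition G1 (R : realType) (X : finType) (p : nat)
  (pihat : 'I_p -> X -> R) : set (X -> 'I_p -> R) :=
  [set g | is_gate g /\ Z_g pihat g = 1].

Definition KL_term (R : realType) (a q : R) : \bar R :=
  if a == 0 then 0%E
  else if q == 0 then +oo%E
  else (a * ln (a / q))%:E.

Definition KL (R : realType) (X : finType) (P Q : X -> R) : \bar R :=
  (\sum_(x : X) KL_term (P x) (Q x))%E.

Definition worstKL (R : realType) (X : finType) (p : nat)
  (phat pihat : 'I_p -> X -> R) (A : set 'rV[R]_p) (g : X -> 'I_p -> R)
  : \bar R :=
  ereal_sup [set KL (mixture phat l) (pi_g pihat g) | l in A].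

Definition Vstar (R : realType) (X : finType) (p : nat)
  (phat pihat : 'I_p -> X -> R) (A : set 'rV[R]_p) : \bar R :=
  ereal_inf [set worstKL phat pihat A g | g in G1 pihat].

Definition dH (R : realType) (p : nat) (Lam Del : set 'rV[R]_p) : \bar R :=
  ereal_sup [set ereal_inf [set (l1norm (l - l'))%:E | l' in Lam]
            | l in Del].

(* Main.v *)
Require Import Defs.
From mathcomp Require Import all_boot all_order all_algebra.
From mathcomp Require Import all_classical all_reals all_analysis.
From mathcomp Require Import lra ring.
Set Implicit Arguments. Unset Strict Implicit. Unset Printing Implicit Defensive.
Import Order.TTheory GRing.Theory Num.Theory.
Import numFieldNormedType.Exports.
Local Open Scope classical_set_scope.
Local Open Scope ring_scope.

Lemma ln_le_sub1 (R : realType) (x : R) : 0 < x -> ln x <= x - 1.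
Proof.
move=> x0; have := expR_ge1Dx (ln x); rewrite lnK ?posrE // => h.
by rewrite lerBrDl.
Qed.

Lemma KL_term_ge (R : realType) (a q : R) : 0 <= a -> 0 <= q ->
  ((a - q)%:E <= KL_term a q)%E.
Proof.
move=> a0 q0; rewrite /KL_term.
have [->|an0] := eqVneq a 0; first by rewrite lee_fin sub0r oppr_le0.
have [->|qn0] := eqVneq q 0; first by rewrite leey.
rewrite lee_fin.
have ap : 0 < a by rewrite lt_def an0.
have qp : 0 < q by rewrite lt_def qn0.
rewrite ln_div ?posrE //.
have := @ln_le_sub1 _ _ (divr_gt0 qp ap); rewrite ln_div ?posrE // => h.
have : a * (ln q - ln a) <= a * (q / a - 1) by rewrite ler_wpM2l // ltW.
have e : a * (q / a - 1) = q - a by rewrite mulrBr mulr1 mulrCA divff ?mulr1 ?lt0r_neq0.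
rewrite e => h2.
have e2 : a * (ln a - ln q) = - (a * (ln q - ln a)) by rewrite -mulrN opprB.
rewrite e2; lra.
Qed.

Lemma KL_ge (R : realType) (X : finType) (P Q : X -> R) :
  (forall x, 0 <= P x) -> (forall x, 0 <= Q x) ->
  ((\sum_x P x - \sum_x Q x)%:E <= KL P Q)%E.
Proof.
move=> P0 Q0; rewrite /KL -sumrB -sumEFin.
by apply: lee_sum => x _; apply: KL_term_ge.
Qed.

Lemma l1norm_ge0 (R : realType) (p : nat) (l : 'rV[R]_p) : 0 <= l1norm l.
Proof. by apply: sumr_ge0 => k _; exact: normr_ge0. Qed.

Lemma l1norm_le2 (R : realType) (p : nat) (l l' : 'rV[R]_p) :
  simplex l -> simplex l' -> l1norm (l - l') <= 2.
Proof.
move=> [l0 l1] [l'0 l'1]; rewrite /l1norm.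
have -> : (2 : R) = \sum_(k < p) (l ord0 k + l' ord0 k) by rewrite big_split /= l1 l'1.
apply: ler_sum => k _; rewrite !mxE.
have := l0 k; have := l'0 k => h1 h2.
by rewrite (le_trans (ler_normB _ _)) // !ger0_norm.
Qed.

Lemma mix_ge0 (R : realType) (X : finType) (p : nat) (phat : 'I_p -> X -> R) l :
  (forall k, is_distr (phat k)) -> simplex l -> forall x, 0 <= mixture phat l x.
Proof.
move=> hp [l0 _] x; apply: sumr_ge0 => k _; apply: mulr_ge0 => //.
by case: (hp k).
Qed.

Lemma mix_sum (R : realType) (X : finType) (p : nat) (phat : 'I_p -> X -> R) l :
  (forall k, is_distr (phat k)) -> simplex l -> \sum_x mixture phat l x = 1.
Proof.
move=> hp [_ l1]; rewrite /mixture exchange_big /= -l1.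
apply: eq_bigr => k _; rewrite -mulr_sumr.
by case: (hp k) => _ ->; rewrite mulr1.
Qed.

Lemma pig_ge0 (R : realType) (X : finType) (p : nat) (pihat : 'I_p -> X -> R) g :
  (forall k, is_distr (pihat k)) -> is_gate g -> forall x, 0 <= pi_g pihat g x.
Proof.
move=> hp hg x; apply: sumr_ge0 => k _; apply: mulr_ge0.
  by case: (hg x) => /(_ k) /andP[].
by case: (hp k).
Qed.

Lemma KL_nonneg (R : realType) (X : finType) (p : nat) (phat pihat : 'I_p -> X -> R) g l :
  (forall k, is_distr (phat k)) -> (forall k, is_distr (pihat k)) ->
  G1 pihat g -> simplex l -> (0 <= KL (mixture phat l) (pi_g pihat g))%E.
Proof.
move=> hp hpi [hg Z1] hl.
have := KL_ge (mix_ge0 hp hl) (pig_ge0 hpi hg).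
by rewrite mix_sum // -/(Z_g pihat g) Z1 subrr.
Qed.

Lemma fin_between (R : realType) (x : \bar R) (b : R) :
  (0 <= x)%E -> (x <= b%:E)%E -> x \is a fin_num.
Proof.
move=> h0 h1; rewrite ge0_fin_numE //; exact: (le_lt_trans h1 (ltry _)).
Qed.

Theorem mainTheorem7 (R : realType) (p : nat) (X : finType)
  (phat pihat : 'I_p -> X -> R) (Lam : set 'rV[R]_p) (L : R) :
  (0 < p)%N ->
  (forall k, is_distr (phat k)) ->
  (forall k, is_distr (pihat k)) ->
  (* X is X_0, the union of the supports of the phat_k *)
  (forall x : X, exists k, 0 < phat k x) ->
  Lam `<=` @simplex R p -> Lam !=set0 -> closed Lam -> convexR Lam ->
  0 <= L ->
  (forall g, G1 pihat g ->
     (forall l, @simplex R p l -> KL (mixture phat l) (pi_g pihat g) \is a fin_num) /\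
     (forall l l', @simplex R p l -> @simplex R p l' ->
        `| fine (KL (mixture phat l) (pi_g pihat g))
           - fine (KL (mixture phat l') (pi_g pihat g)) | <= L * l1norm (l - l'))) ->
  (0 <= Vstar phat pihat (@simplex R p) - Vstar phat pihat Lam)%E /\
  (Vstar phat pihat (@simplex R p) - Vstar phat pihat Lam
     <= L%:E * dH Lam (@simplex R p))%E.
Proof.
move=> p0 hp hpi _ LamS [l0 Lam0] _ _ L0 hG.
set S := @simplex R p.
have Sl0 : S l0 := LamS _ Lam0.
pose g0 : X -> 'I_p -> R := fun _ _ => p%:R^-1.
have pR : (0 : R) < p%:R by rewrite ltr0n.
have sumc : \sum_(k < p) (p%:R^-1 : R) = 1.
  by rewrite sumr_const card_ord -(mulr_natr (p%:R^-1)) mulVf ?gt_eqF.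
have G0 : G1 pihat g0.
  split.
    move=> x; split; last exact: sumc; move=> k.
    by rewrite /g0 invr_ge0 (ltW pR) /= invf_le1 // ler1n.
  rewrite /Z_g /pi_g exchange_big /= -sumc; apply: eq_bigr => k _.
  by rewrite -mulr_sumr; case: (hpi k) => _ ->; rewrite mulr1.
have Wfin : forall A g, A `<=` S -> A l0 -> G1 pihat g ->
   (0 <= worstKL phat pihat A g)%E /\
   (worstKL phat pihat A g <= (fine (KL (mixture phat l0) (pi_g pihat g)) + L * 2)%:E)%E.
  move=> A g AS Al0 Gg; have [fin lip] := hG g Gg; split.
    apply: le_trans (KL_nonneg hp hpi Gg Sl0) _.
    by apply: ereal_sup_ubound; exists l0.
  apply: ge_ereal_sup => _ [l Al <-].
  have Sl := AS _ Al.
  rewrite -(fineK (fin l Sl)) lee_fin.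
  have := lip l l0 Sl Sl0; rewrite ler_norml => /andP[_ h].
  have h2 := l1norm_le2 Sl Sl0.
  have : L * l1norm (l - l0) <= L * 2 by rewrite ler_wpM2l.
  lra.
have Wf : forall A g, A `<=` S -> A l0 -> G1 pihat g ->
    worstKL phat pihat A g \is a fin_num.
  move=> A g AS Al0 Gg; have [h1 h2] := Wfin A g AS Al0 Gg.
  exact: fin_between h1 h2.
have dHub : forall l, S l ->
    (ereal_inf [set (l1norm (l - l'))%:E | l' in Lam] <= dH Lam S)%E.
  by move=> l Sl; apply: ereal_sup_ubound; exists l.
have dH0 : (0 <= dH Lam S)%E.
  apply: le_trans (dHub l0 Sl0).
  by apply: le_ereal_inf_tmp => _ [l' _ <-]; rewrite lee_fin l1norm_ge0.
have dH2 : (dH Lam S <= (2 : R)%:E)%E.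
  apply: ge_ereal_sup => _ [l Sl <-]; apply: ge_ereal_inf.
  exists (l1norm (l - l0))%:E; first by exists l0.
  by rewrite lee_fin l1norm_le2.
have dHE := fineK (fin_between dH0 dH2).
set d := fine (dH Lam S) in dHE.
have VLE : (fine (Vstar phat pihat Lam))%:E = Vstar phat pihat Lam.
  apply: fineK; apply: (@fin_between _ _ (fine (KL (mixture phat l0) (pi_g pihat g0)) + L * 2)).
    by apply: le_ereal_inf_tmp => _ [g Gg <-]; exact: (Wfin Lam g LamS Lam0 Gg).1.
  apply: le_trans (Wfin Lam g0 LamS Lam0 G0).2.
  by apply: ereal_inf_lbound; exists g0.
have VSE : (fine (Vstar phat pihat S))%:E = Vstar phat pihat S.
  apply: fineK; apply: (@fin_between _ _ (fine (KL (mixture phat l0) (pi_g pihat g0)) + L * 2)).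
    by apply: le_ereal_inf_tmp => _ [g Gg <-]; exact: (Wfin S g (@subset_refl _ _) Sl0 Gg).1.
  apply: le_trans (Wfin S g0 (@subset_refl _ _) Sl0 G0).2.
  by apply: ereal_inf_lbound; exists g0.
set vL := fine (Vstar phat pihat Lam) in VLE.
set vS := fine (Vstar phat pihat S) in VSE.
have key : forall g, G1 pihat g ->
    (worstKL phat pihat S g <= worstKL phat pihat Lam g + (L * d)%:E)%E.
  move=> g Gg; have [fin lip] := hG g Gg.
  have WE := fineK (Wf Lam g LamS Lam0 Gg).
  rewrite -WE; set w := fine _ in WE *.
  apply: ge_ereal_sup => _ [l Sl <-].
  rewrite -(fineK (fin l Sl)) -EFinD lee_fin.
  set f := fine _.
  have hl' : forall l', Lam l' -> f - w <= L * l1norm (l - l').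
    move=> l' Ll'; have Sl' := LamS _ Ll'.
    have : (KL (mixture phat l') (pi_g pihat g) <= w%:E)%E.
      by rewrite WE; apply: ereal_sup_ubound; exists l'.
    rewrite -(fineK (fin l' Sl')) lee_fin => h1.
    have := lip l l' Sl Sl'; rewrite ler_norml => /andP[_ h]; rewrite /f; lra.
  have [L00|Lp] := eqVneq L 0.
    have := hl' l0 Lam0; rewrite L00 !mul0r; lra.
  have Lpos : 0 < L by rewrite lt_def Lp L0.
  have : (((f - w) / L)%:E <= dH Lam S)%E.
    apply: le_trans (dHub l Sl).
    apply: le_ereal_inf_tmp => _ [l' Ll' <-].
    by rewrite lee_fin ler_pdivrMr // mulrC; exact: hl'.
  rewrite -dHE lee_fin ler_pdivrMr // mulrC => h; lra.
have le1 : (vL <= vS)%R.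
  rewrite -lee_fin VLE VSE.
  apply: le_ereal_inf_tmp => _ [g Gg <-].
  apply: le_trans (ereal_inf_lbound _) _; first by exists g.
  by apply: ereal_sup_le => _ [l Ll <-]; exists l => //; exact: LamS.
have le2 : (vS - L * d <= vL)%R.
  rewrite -lee_fin VLE.
  apply: le_ereal_inf_tmp => _ [g Gg <-].
  have h1 : (vS%:E <= worstKL phat pihat S g)%E.
    by rewrite VSE; apply: ereal_inf_lbound; exists g.
  have h2 := le_trans h1 (key g Gg).
  move: h2; rewrite -(fineK (Wf Lam g LamS Lam0 Gg)) -EFinD !lee_fin => h2.
  lra.
rewrite -VLE -VSE -dHE -EFinB -EFinM !lee_fin; split; lra.
Qed.
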